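(* Let $P_1,\dots,P_5\in\mathbb{R}^3$, indices taken mod 5, satisfy $\det(P_{i-1},P_i,P_{i+1})=1$ for all $i$, and let $a_i,b_i$ (5-periodic) be the coefficients with $P_{i+2}=a_{i+1}P_{i+1}-b_iP_i+P_{i-1}$ for all $i$. Then for all $i$ (mod 5), $$b_i=a_{i+3},\qquad a_i+1=a_{i+2}a_{i+3}.$$
   Context: A polygon $(P_i)$ in $\mathbb{R}^3$ with $\det(P_{i-1},P_i,P_{i+1})=1$ for all $i$ is called unimodular; for such a polygon the vectors $P_{i-1},P_i,P_{i+1}$ form a basis, and the unimodularity forces the coefficient of $P_{i-1}$ in the expansion of $P_{i+2}$ to be $1$, so the recurrence $P_{i+2}=a_{i+1}P_{i+1}-b_iP_i+P_{i-1}$ defines the sequences $a_i,b_i$. *)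

(* Defs.v *)
From HB Require Import structures.
From mathcomp Require Import all_boot all_order all_algebra.
From mathcomp Require Import all_classical all_reals.
Set Implicit Arguments. Unset Strict Implicit. Unset Printing Implicit Defensive.
Import Order.TTheory GRing.Theory Num.Theory.
Local Open Scope ring_scope.

(* The 3x3 matrix whose rows are u, v, w (det is the same as with columns). *)
Definition mat3 (R : ringType) (u v w : 'rV[R]_3) : 'M[R]_3 :=
  \matrix_(k < 3, j < 3) (nth 0 [:: u; v; w] k) 0 j.

Definition det3 (R : comRingType) (u v w : 'rV[R]_3) : R := \det (mat3 u v w).

(* Main.v *)
Require Import Defs.
From HB Require Import structures.
From mathcomp Require Import all_boot all_order all_algebra.
From mathcomp Require Import all_classical all_reals.
From mathcomp Require Import ring.
Import Order.TTheory GRing.Theory Num.Theory.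
Local Open Scope ring_scope.
Ltac detx := rewrite /det3 /mat3 !(expand_det_row _ ord0) !big_ord_recl !big_ord0 /cofactor;
  rewrite !(expand_det_row _ ord0) !big_ord_recl !big_ord0 /cofactor !addr0 !det_mx11 !mxE /= ?mxE /bump /=.
Lemma rv3 (R : comRingType) (x : 'rV[R]_3) : x = \row_k [:: x 0 0; x 0 1; x 0 2]`_k.
Proof. by apply/rowP => -[[|[|[|]]] Hk] //=; rewrite mxE /=; congr (x 0 _); apply/val_inj. Qed.
Lemma det3E (R : comRingType) (u v w : 'rV[R]_3) : det3 u v w =
  u 0 0 * (v 0 1 * w 0 2 - v 0 2 * w 0 1) - u 0 1 * (v 0 0 * w 0 2 - v 0 2 * w 0 0)
  + u 0 2 * (v 0 0 * w 0 1 - v 0 1 * w 0 0).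
Proof.
rewrite {1}(rv3 _ u) {1}(rv3 _ v) {1}(rv3 _ w). detx. rewrite ?addn0 ?add0n ?addn1 expr0 expr1 ?sqrrN1 ?expr1n. ring.
Qed.

Lemma core (R : comRingType) (q4 q5 q6 q7 q8 : 'rV[R]_3) (A5 A6 A7 A8 B4 B5 B6 B7 : R)
  (d4 : det3 q4 q5 q6 = 1) (d6 : det3 q6 q7 q8 = 1)
  (r7 : q7 = A6 *: q6 - B5 *: q5 + q4)
  (r8 : q8 = A7 *: q7 - B6 *: q6 + q5)
  (r6 : q6 = A5 *: q5 - B4 *: q4 + q8)
  (r9 : q4 = A8 *: q8 - B7 *: q7 + q6) :
  B5 = A8 /\ A5 + 1 = A7 * A8.
Proof.
have e1 : det3 q4 q6 q7 = B5 * det3 q4 q5 q6.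
  by rewrite r7 !det3E !mxE; ring.
have e2 : det3 q6 q7 q4 = A8 * det3 q6 q7 q8.
  by rewrite {1}r9 !det3E !mxE; ring.
have e3 : det3 q6 q7 q4 = det3 q4 q6 q7 by rewrite !det3E; ring.
have hB : B5 = A8 by move: e1 e2 e3; rewrite d4 d6 !mulr1 => -> -> .
split=> //.
have r8' : q8 = q6 - A5 *: q5 + B4 *: q4.
  by rewrite r6; apply/rowP => j; rewrite !mxE; ring.
have e4 : det3 q4 q8 q6 = (1 - A7 * B5) * det3 q4 q5 q6.
  by rewrite r8 r7 !det3E !mxE; ring.
have e5 : det3 q4 q8 q6 = - A5 * det3 q4 q5 q6.
  by rewrite {1}r8' !det3E !mxE; ring.
move: e4 e5; rewrite d4 !mulr1 -hB => ->.
move=> h; rewrite -[A5]opprK -h; ring.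
Qed.

Theorem lemma2p1 (R : realType) (P : 'Z_5 -> 'rV[R]_3) (a b : 'Z_5 -> R)
  (hdet : forall i : 'Z_5, det3 (P (i - 1)) (P i) (P (i + 1)) = 1)
  (hrec : forall i : 'Z_5,
      P (i + 2%:R) = a (i + 1) *: P (i + 1) - b i *: P i + P (i - 1)) :
  forall i : 'Z_5, b i = a (i + 3%:R) /\ a i + 1 = a (i + 2%:R) * a (i + 3%:R).
Proof.
move=> i.
pose Q n := P (i + n%:R). pose A n := a (i + n%:R). pose B n := b (i + n%:R).
have five : (5%:R : 'Z_5) = 0 by apply/val_inj.
have per : forall n, (i + (n + 5)%:R) = i + n%:R by move=> n; rewrite natrD five addr0.
have E1 : forall n, i + n.+1%:R + 2%:R = i + n.+3%:R.
  by move=> n; rewrite -addrA -natrD addn2.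
have E2 : forall n, i + n.+1%:R + 1 = i + n.+2%:R.
  by move=> n; rewrite -addrA [n.+2%:R]mulrSr.
have E3 : forall n, i + n.+1%:R - 1 = i + n%:R.
  by move=> n; rewrite -addrA mulrSr addrK.
have hQ : forall n, Q n.+3 = A n.+2 *: Q n.+2 - B n.+1 *: Q n.+1 + Q n.
  by move=> n; have := hrec (i + n.+1%:R); rewrite E1 E2 E3.
have hD : forall n, det3 (Q n) (Q n.+1) (Q n.+2) = 1.
  by move=> n; have := hdet (i + n.+1%:R); rewrite E2 E3.
have hB5 : b i = B 5 by rewrite /B (per 0) addr0.
have hA5 : a i = A 5 by rewrite /A (per 0) addr0.
have hA8 : a (i + 3%:R) = A 8 by rewrite /A (per 3).
have h3 : Q 3 = Q 8 by rewrite /Q (per 3).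
have h4 : Q 9 = Q 4 by rewrite /Q (per 4).
have hA7 : a (i + 2%:R) = A 7 by rewrite /A (per 2).
rewrite hB5 hA5 hA8 hA7.
apply: (@core _ (Q 4) (Q 5) (Q 6) (Q 7) (Q 8) (A 5) (A 6) (A 7) (A 8) (B 4) (B 5) (B 6) (B 7)).
- exact: hD.
- exact: hD.
- exact: hQ.
- exact: hQ.
- by rewrite -h3 hQ.
- by rewrite -h4 hQ.
Qed.
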